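(* Let $q\ge 7$ and $s\in[1,7]$ be integers, $C$ a finite set with $|C|=2q+s$, and $M\in\mathcal M(6,q,C)$. Let $\{i,k\}\subseteq\{1,\dots,6\}$, $i\ne k$, with $r(i,k)\ge 1$, and let $B\subseteq\{1,\dots,6\}$ with $3\le|B|\le 4$ and $B\cap\{i,k\}=\emptyset$. Then $r(B)\le r^*(B)\le 2|B|$.
   Context: $\mathcal M(6,q,C)$ is the set of $6\times q$ matrices $M$ with entries from $C$ such that each row has $q$ pairwise distinct entries, each column has $6$ pairwise distinct entries, and every pair of distinct colours of $C$ appears together in some row or some column of $M$. The frequency of a colour is the number of entries of $M$ equal to it. For $A\subseteq\{1,\dots,6\}$ with $|A|\ge 2$, $\operatorname{ro}(A)$ denotes the set of colours of frequency exactly $|A|$ that appear in every row indexed by an element of $A$, and $r(A)=|\operatorname{ro}(A)|$; $r(i,k)=r(\{i,k\})$. For $B\subseteq\{1,\dots,6\}$ with $3\le|B|\le4$, $\operatorname{ro}^*(B)=\bigcup\{\operatorname{ro}(A): A\subseteq B,\ 2\le|A|\le|B|\}$ and $r^*(B)=|\operatorname{ro}^*(B)|$. *)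

(* Defs.v *)
From mathcomp Require Import all_boot all_order all_algebra.
Set Implicit Arguments. Unset Strict Implicit. Unset Printing Implicit Defensive.

(* Rows {1..6} are represented by 'I_6 = {0..5}, columns by 'I_q. *)
Section Defs.
Variables (C : finType) (q : nat).

Definition in_M6 (M : 'M[C]_(6, q)) : Prop :=
  [/\ (forall i : 'I_6, injective (fun j : 'I_q => M i j)),
      (forall j : 'I_q, injective (fun i : 'I_6 => M i j)) &
      (forall c d : C, c != d ->
         (exists i : 'I_6, exists j j' : 'I_q, M i j = c /\ M i j' = d) \/
         (exists j : 'I_q, exists i i' : 'I_6, M i j = c /\ M i' j = d))].

Definition freq (M : 'M[C]_(6, q)) (c : C) : nat :=
  #|[set p : 'I_6 * 'I_q | M p.1 p.2 == c]|.

Definition ro (M : 'M[C]_(6, q)) (A : {set 'I_6}) : {set C} :=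
  [set c | (freq M c == #|A|) && [forall i in A, exists j : 'I_q, M i j == c]].

Definition r (M : 'M[C]_(6, q)) (A : {set 'I_6}) : nat := #|ro M A|.

Definition ro_star (M : 'M[C]_(6, q)) (B : {set 'I_6}) : {set C} :=
  \bigcup_(A : {set 'I_6} | (A \subset B) && (2 <= #|A|)) ro M A.

Definition r_star (M : 'M[C]_(6, q)) (B : {set 'I_6}) : nat := #|ro_star M B|.
End Defs.

(* Main.v *)
Require Import Defs.
From mathcomp Require Import all_boot all_order all_algebra.

Lemma rows_in (C : finType) (q : nat) (M : 'M[C]_(6, q)) (A : {set 'I_6}) c a j :
  (forall i : 'I_6, injective (fun j : 'I_q => M i j)) ->
  c \in ro M A -> M a j = c -> a \in A.
Proof.
move=> Hrow; rewrite inE => /andP [/eqP Hf /forall_inP Hall] Haj.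
set S := [set p : 'I_6 * 'I_q | M p.1 p.2 == c].
have injS : {in S &, injective fst}.
  move=> [a1 j1] [a2 j2]; rewrite !inE /= => /eqP h1 /eqP h2 /= e; subst a2.
  by rewrite (Hrow a1 j1 j2 _) //= h1 h2.
have cardS : #|fst @: S| = #|A| by rewrite card_in_imset // -Hf.
have sub : A \subset fst @: S.
  apply/subsetP => b Hb; have /existsP [j' Hj'] := Hall b Hb.
  by apply/imsetP; exists (b, j'); rewrite // inE.
have := subset_cardP (esym cardS) sub => /(_ a) ->.
by apply/imsetP; exists (a, j); rewrite // inE Haj.
Qed.

Theorem claim3 (C : finType) (q s : nat) (M : 'M[C]_(6, q))
  (i k : 'I_6) (B : {set 'I_6}) :
  7 <= q -> 1 <= s <= 7 -> #|C| = 2 * q + s ->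
  in_M6 M ->
  i != k -> 1 <= r M [set i; k] ->
  3 <= #|B| <= 4 -> [disjoint B & [set i; k]] ->
  r M B <= r_star M B <= 2 * #|B|.
Proof.
move=> _ _ _ [Hrow Hcol Hpair] _ Hr /andP [HB3 _] Hdis.
apply/andP; split.
  apply: subset_leq_card; apply/subsetP => y Hy.
  by apply/bigcupP; exists B; rewrite ?subxx //; apply: leq_trans HB3.
have /card_gt0P [x Hx] := Hr.
have := Hx; rewrite inE => /andP [_ /forall_inP Hxall].
have /existsP [j1 /eqP Hj1] := Hxall i (set21 i k).
have /existsP [j2 /eqP Hj2] := Hxall k (set22 i k).
pose f (p : 'I_6 * bool) := M p.1 (if p.2 then j1 else j2).
have sub : ro_star M B \subset f @: setX B [set: bool].
  apply/subsetP => y /bigcupP [A /andP [HAB _] Hy].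
  have inB : forall a j, M a j = y -> a \in B.
    by move=> a j e; apply: (subsetP HAB); apply: rows_in Hrow Hy e.
  have inik : forall a j, M a j = x -> a \in [set i; k].
    by move=> a j e; apply: rows_in Hrow Hx e.
  have notboth : forall a, a \in B -> a \in [set i; k] -> False.
    by move=> a h1 h2; move: (disjointFr Hdis h1); rewrite h2.
  have yx : y != x.
    apply/eqP => e; apply: (notboth i); last exact: set21.
    by apply: (inB i j1); rewrite Hj1 e.
  case: (Hpair y x yx) => [[a [j [j' [e1 e2]]]] | [j [a [a' [e1 e2]]]]].
    by case: (notboth a); [apply: (inB a j) | apply: (inik a j')].
  have aB := inB a j e1.
  apply/imsetP; move: (inik a' j e2); rewrite !inE => /orP [] /eqP ea; subst a'.
    exists (a, true); rewrite /f /= ?inE ?aB //.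
    by rewrite -e1 (Hrow i j j1) // /= e2 Hj1.
  exists (a, false); rewrite /f /= ?inE ?aB //.
  by rewrite -e1 (Hrow k j j2) // /= e2 Hj2.
rewrite /r_star; apply: (leq_trans (subset_leq_card sub)).
apply: (leq_trans (leq_imset_card _ _)).
by rewrite cardsX cardsT card_bool mulnC.
Qed.
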